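(* Let $\mathbb{R}^3$ carry the Euclidean dot product $\cdot$, cross product $\times$ and norm $|\cdot|$. For $\mathbf r\neq \mathbf 0$ and $\mathbf u,\mathbf w\in\mathbb{R}^3$ define $$\mathbf f(\mathbf r,\mathbf u,\mathbf w)\triangleq\Big(\mathbf w\cdot\tfrac{\mathbf r}{|\mathbf r|}\Big)\mathbf u+\Big(\mathbf u\cdot\tfrac{\mathbf r}{|\mathbf r|}\Big)\mathbf w+\Big[(\mathbf u\cdot\mathbf w)-5\Big(\mathbf u\cdot\tfrac{\mathbf r}{|\mathbf r|}\Big)\Big(\mathbf w\cdot\tfrac{\mathbf r}{|\mathbf r|}\Big)\Big]\tfrac{\mathbf r}{|\mathbf r|}.$$ For $\mathbf r\neq\mathbf 0$ and $\mathbf f^*\in\mathbb{R}^3$ define $$\Phi_1(\mathbf r,\mathbf f^* )\triangleq\sqrt{|\mathbf r\times\mathbf f^*|^2+|\mathbf r|^2|\mathbf f^*|^2},\qquad \Phi_2(\mathbf r,\mathbf f^* )\triangleq\big(2-\operatorname{sgn}(\mathbf r\cdot\mathbf f^* )^2\big)\Phi_1(\mathbf r,\mathbf f^* ),$$ $$g_{\mathrm r}\triangleq-\frac{\operatorname{sgn}(\mathbf r\cdot\mathbf f^* )}{2}\Big(\frac{|\mathbf r\cdot\mathbf f^*|+\Phi_1}{|\mathbf r|}\Big)^{1/2},\qquad g_{\mathrm{rf}}\triangleq\frac{1}{\sqrt2}\Big(\frac{-|\mathbf r\cdot\mathbf f^*|+\Phi_2}{|\mathbf r|}\Big)^{1/2},$$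 $$h_{\mathrm r}\triangleq\frac12\Big(\frac{|\mathbf r\cdot\mathbf f^*|+\Phi_2}{|\mathbf r|}\Big)^{1/2},\qquad h_{\mathrm{rf}}\triangleq-\frac{\operatorname{sgn}(\mathbf r\cdot\mathbf f^* )}{\sqrt2}\Big(\frac{-|\mathbf r\cdot\mathbf f^*|+\Phi_1}{|\mathbf r|}\Big)^{1/2},$$ where all of these are evaluated at $(\mathbf r,\mathbf f^* )$. Define $$\mathbf g(\mathbf r,\mathbf f^* )\triangleq\begin{cases}\frac{g_{\mathrm r}}{|\mathbf r|}\mathbf r+\frac{g_{\mathrm{rf}}}{|\mathbf r||\mathbf r\times\mathbf f^*|}\big((\mathbf r\times\mathbf f^* )\times\mathbf r\big), & \mathbf r\times\mathbf f^*\neq\mathbf 0,\\ \frac{g_{\mathrm r}}{|\mathbf r|}\mathbf r, & \mathbf r\times\mathbf f^*=\mathbf 0,\end{cases}$$ $$\mathbf h(\mathbf r,\mathbf f^* )\triangleq\begin{cases}\frac{h_{\mathrm r}}{|\mathbf r|}\mathbf r+\frac{h_{\mathrm{rf}}}{|\mathbf r||\mathbf r\times\mathbf f^*|}\big((\mathbf r\times\mathbf f^* )\times\mathbf r\big), & \mathbf r\times\mathbf f^*\neq\mathbf 0,\\ \frac{h_{\mathrm r}}{|\mathbf r|}\mathbf r, & \mathbf r\times\mathbf f^*=\mathbf 0.\end{cases}$$ Then for all $\mathbf f^*\in\mathbb{R}^3$ and all $\mathbf r\in\mathbb{R}^3$ with $\mathbf r\neq\mathbf 0$, $$\mathbf f\big(\mathbf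 r,\mathbf g(\mathbf r,\mathbf f^* ),\mathbf h(\mathbf r,\mathbf f^* )\big)=\mathbf f^*.$$
   Context: $\operatorname{sgn}$ denotes the sign function with $\operatorname{sgn}(x)=1$ for $x>0$, $\operatorname{sgn}(x)=-1$ for $x<0$, and $\operatorname{sgn}(0)=0$; square roots are nonnegative real square roots. The function $\mathbf f$ is (up to a positive factor) the magnetic dipole–dipole force exerted on a dipole of moment $\mathbf u$ at relative position $\mathbf r$ by a dipole of moment $\mathbf w$; $\mathbf g,\mathbf h$ give a pair of dipole amplitudes producing a prescribed force value $\mathbf f^*$. *)

(* Defs.v *)
(* vectors of R^3 are row vectors 'rV[R]_3 over a real closed field R
   (we need square roots: Num.sqrt). sgn is Num.sg. *)
From HB Require Import structures.
From mathcomp Require Import all_boot all_order all_algebra.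
Set Implicit Arguments. Unset Strict Implicit. Unset Printing Implicit Defensive.
Import Order.TTheory GRing.Theory Num.Theory.
Local Open Scope ring_scope.

Section Dipole.
Variable R : rcfType.
Local Notation vec := 'rV[R]_3.

Definition c0 (u : vec) : R := u 0 0.
Definition c1 (u : vec) : R := u 0 1.
Definition c2 (u : vec) : R := u 0 2%:R.

Definition mkv (a b c : R) : vec := \row_(i < 3) [:: a; b; c]`_i.

Definition dot (u v : vec) : R := \sum_(i < 3) u 0 i * v 0 i.
Definition vnorm (u : vec) : R := Num.sqrt (dot u u).
Definition cross (u v : vec) : vec :=
  mkv (c1 u * c2 v - c2 u * c1 v)
      (c2 u * c0 v - c0 u * c2 v)
      (c0 u * c1 v - c1 u * c0 v).

Definition dforce (r u w : vec) : vec :=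
  let rh := (vnorm r)^-1 *: r in
  (dot w rh) *: u + (dot u rh) *: w + (dot u w - 5 * dot u rh * dot w rh) *: rh.

Definition Phi1 (r fs : vec) : R :=
  Num.sqrt (vnorm (cross r fs) ^+ 2 + vnorm r ^+ 2 * vnorm fs ^+ 2).
Definition Phi2 (r fs : vec) : R :=
  (2 - Num.sg (dot r fs) ^+ 2) * Phi1 r fs.

Definition g_r (r fs : vec) : R :=
  - (Num.sg (dot r fs) / 2) *
    Num.sqrt ((`|dot r fs| + Phi1 r fs) / vnorm r).
Definition g_rf (r fs : vec) : R :=
  (Num.sqrt 2)^-1 * Num.sqrt ((- `|dot r fs| + Phi2 r fs) / vnorm r).
Definition h_r (r fs : vec) : R :=
  2^-1 * Num.sqrt ((`|dot r fs| + Phi2 r fs) / vnorm r).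
Definition h_rf (r fs : vec) : R :=
  - (Num.sg (dot r fs) / Num.sqrt 2) *
    Num.sqrt ((- `|dot r fs| + Phi1 r fs) / vnorm r).

Definition gvec (r fs : vec) : vec :=
  if cross r fs != 0 then
    (g_r r fs / vnorm r) *: r +
    (g_rf r fs / (vnorm r * vnorm (cross r fs))) *: cross (cross r fs) r
  else (g_r r fs / vnorm r) *: r.

Definition hvec (r fs : vec) : vec :=
  if cross r fs != 0 then
    (h_r r fs / vnorm r) *: r +
    (h_rf r fs / (vnorm r * vnorm (cross r fs))) *: cross (cross r fs) r
  else (h_r r fs / vnorm r) *: r.

End Dipole.

(* Main.v *)
Require Import Defs.
From mathcomp Require Import all_boot all_order all_algebra.
From mathcomp Require Import ring lra.
Import Order.TTheory GRing.Theory Num.Theory.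
Local Open Scope ring_scope.

Section S.
Variable R : rcfType.
Implicit Types u v r e : 'rV[R]_3.

Lemma dotE u v : dot u v = u 0 0 * v 0 0 + u 0 1 * v 0 1 + u 0 2%:R * v 0 2%:R.
Proof. by rewrite /dot !big_ord_recr big_ord0 /= add0r; congr (_ + _ + _); congr (_ * _); congr (_ _ _); apply: val_inj. Qed.

Lemma mkvE (a b c : R) i : mkv a b c 0 i = [:: a; b; c]`_i.
Proof. by rewrite /mkv mxE. Qed.

Lemma vecP u v : u 0 0 = v 0 0 -> u 0 1 = v 0 1 -> u 0 2%:R = v 0 2%:R -> u = v.
Proof.
move=> h0 h1 h2; apply/rowP => i.
case: i => [[|[|[|k]]] Hi] //.
- by rewrite (_ : Ordinal Hi = 0) //; apply: val_inj.
- by rewrite (_ : Ordinal Hi = 1) //; apply: val_inj.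
- by rewrite (_ : Ordinal Hi = 2%:R) //; apply: val_inj.
Qed.

Lemma dotC u v : dot u v = dot v u.
Proof. rewrite !dotE; ring. Qed.
Lemma dotDl u v w : dot (u + v) w = dot u w + dot v w.
Proof. rewrite !dotE !mxE; ring. Qed.
Lemma dotZl a u w : dot (a *: u) w = a * dot u w.
Proof. rewrite !dotE !mxE; ring. Qed.
Lemma dotDr u v w : dot w (u + v) = dot w u + dot w v.
Proof. rewrite !dotE !mxE; ring. Qed.
Lemma dotZr a u w : dot w (a *: u) = a * dot w u.
Proof. rewrite !dotE !mxE; ring. Qed.

Lemma dot_ge0 u : 0 <= dot u u.
Proof. rewrite dotE; apply: addr_ge0; [apply: addr_ge0|]; exact: mul_ge0_le0 || apply: sqr_ge0. Qed.

Lemma dot_eq0 u : dot u u = 0 -> u = 0.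
Proof.
rewrite dotE => h.
have h0 : u 0 0 * u 0 0 = 0 by nra.
have h1 : u 0 1 * u 0 1 = 0 by nra.
have h2 : u 0 2%:R * u 0 2%:R = 0 by nra.
apply: vecP; rewrite mxE; apply/eqP.
- by move/eqP: h0; rewrite mulf_eq0 orbb.
- by move/eqP: h1; rewrite mulf_eq0 orbb.
- by move/eqP: h2; rewrite mulf_eq0 orbb.
Qed.

Lemma cross_id r f :
  cross (cross r f) r = dot r r *: f - dot r f *: r.
Proof.
apply: vecP; rewrite /cross /c0 /c1 /c2 !mkvE !mxE !dotE /=; ring.
Qed.

Lemma lagrange r f :
  dot (cross r f) (cross r f) = dot r r * dot f f - dot r f ^+ 2.
Proof. rewrite /cross /c0 /c1 /c2 !dotE !mkvE /=; ring. Qed.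


Lemma dforce_dec r e p q p' q' : dot r e = 0 -> r != 0 ->
  dforce r (p *: r + q *: e) (p' *: r + q' *: e) =
  (2 * p * p' * vnorm r + (q * q' * dot e e - 4 * p * p' * dot r r) / vnorm r) *: r
  + (vnorm r * (p' * q + p * q')) *: e.
Proof.
move=> hre r0.
have Npos : 0 < dot r r.
  rewrite Order.POrderTheory.lt_def dot_ge0 andbT; apply/eqP => /dot_eq0 h; by rewrite h eqxx in r0.
have npos : 0 < vnorm r by rewrite /vnorm sqrtr_gt0.
have hn2 : dot r r = vnorm r ^+ 2 by rewrite /vnorm sqr_sqrtr // ltW.
have her : dot e r = 0 by rewrite dotC.
have nn0 : vnorm r != 0 by rewrite gt_eqF.
rewrite /dforce !(dotDl, dotDr, dotZl, dotZr) her hre hn2.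
move: (vnorm r) npos nn0 => n npos nn0.
apply: vecP; rewrite !mxE; field; exact: nn0.
Qed.


Lemma sqrt2_facts : 0 < Num.sqrt (2:R) /\ Num.sqrt (2:R) ^+ 2 = 2.
Proof. split; [by rewrite sqrtr_gt0 | by rewrite sqr_sqrtr]. Qed.

Lemma sq_eq (x y : R) : 0 <= x -> 0 <= y -> x ^+ 2 = y ^+ 2 -> x = y.
Proof. by move=> hx hy /eqP; rewrite eqrXn2 // => /eqP. Qed.

Lemma scalar_core (d C n : R) : 0 <= C -> 0 < n ->
  let S := Num.sqrt (2 * C + d ^+ 2) in
  let P2 := (2 - Num.sg d ^+ 2) * S in
  let g1 := - (Num.sg d / 2) * Num.sqrt ((`|d| + S) / n) in
  let g2 := (Num.sqrt 2)^-1 * Num.sqrt ((- `|d| + P2) / n) in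
  let h1 := 2^-1 * Num.sqrt ((`|d| + P2) / n) in
  let h2 := - (Num.sg d / Num.sqrt 2) * Num.sqrt ((- `|d| + S) / n) in
  [/\ g2 * h2 - 2 * g1 * h1 = d / n,
      g1 * h2 + g2 * h1 = Num.sqrt C / n &
      C = 0 -> h2 = 0].
Proof.
move=> C0 n0 S P2 g1 g2 h1 h2; rewrite {}/h2 {}/g1 {}/g2 {}/h1 {}/P2 {}/S.
have [t0 t2] := sqrt2_facts.
have tn0 : Num.sqrt (2:R) != 0 by rewrite gt_eqF.
have nn0 : n != 0 by rewrite gt_eqF.
have hsC : Num.sqrt (2 * C) = Num.sqrt 2 * Num.sqrt C by rewrite sqrtrM.
have sC0 : 0 <= Num.sqrt C by rewrite sqrtr_ge0.
have sC2 : Num.sqrt C ^+ 2 = C by rewrite sqr_sqrtr.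
have [->|dn0] := eqVneq d 0.
  rewrite sgr0 normr0 expr0n /= !(mul0r, oppr0, subr0, add0r, mulr0, addr0, mul1r, subr0, sub0r).
  split => //.
  set Z := Num.sqrt (2 * Num.sqrt (2 * C) / n).
  have Z2 : Z ^+ 2 = (2 * Num.sqrt (2 * C)) / n.
    rewrite /Z sqr_sqrtr //; apply: divr_ge0; [apply: mulr_ge0 => //; exact: sqrtr_ge0 | exact: ltW].
  rewrite hsC in Z2.
  have -> : (Num.sqrt 2)^-1 * Z * (2^-1 * Z) = Z ^+ 2 / (2 * Num.sqrt 2) by field.
  rewrite Z2; field; by rewrite tn0 nn0.
set S := Num.sqrt (2 * C + d ^+ 2).
have S0 : 0 <= S by rewrite sqrtr_ge0.
have S2 : S ^+ 2 = 2 * C + d ^+ 2 by rewrite sqr_sqrtr //; nra.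
have Sd : `|d| <= S.
  by rewrite -sqrtr_sqr /S ler_sqrt; [nra | nra].
have sg2 : Num.sg d ^+ 2 = 1 by rewrite sqr_sg dn0.
rewrite sg2 (_ : (2 - 1) * S = S); last by ring.
set X := Num.sqrt ((`|d| + S) / n).
set Y := Num.sqrt ((- `|d| + S) / n).
have X0 : 0 <= X by rewrite sqrtr_ge0.
have Y0 : 0 <= Y by rewrite sqrtr_ge0.
have X2 : X ^+ 2 = (`|d| + S) / n.
  rewrite /X sqr_sqrtr //; apply: divr_ge0; [apply: addr_ge0 => //; exact: normr_ge0 | exact: ltW].
have Y2 : Y ^+ 2 = (- `|d| + S) / n.
  rewrite /Y sqr_sqrtr //; apply: divr_ge0; [by rewrite addrC subr_ge0 | exact: ltW].
have XY : X * Y = Num.sqrt 2 * Num.sqrt C / n.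
  apply: sq_eq; first exact: mulr_ge0.
    by apply: divr_ge0; [apply: mulr_ge0 => //; exact: ltW | exact: ltW].
  rewrite exprMn X2 Y2 !exprMn exprVn t2 sC2.
  have -> : (`|d| + S) / n * ((- `|d| + S) / n) = (S ^+ 2 - `|d| ^+ 2) / n ^+ 2 by field.
  rewrite S2 real_normK ?num_real //; field; exact: nn0.
split.
- have -> : (Num.sqrt 2)^-1 * Y * (- (Num.sg d / Num.sqrt 2) * Y) -
      2 * (- (Num.sg d / 2) * X) * (2^-1 * X) =
      Num.sg d * (X ^+ 2 / 2 - Y ^+ 2 / Num.sqrt 2 ^+ 2) by field.
  rewrite t2 X2 Y2 -[in RHS](mulr_sg_norm d); field; exact: nn0.
- have -> : - (Num.sg d / 2) * X * (- (Num.sg d / Num.sqrt 2) * Y) +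
      (Num.sqrt 2)^-1 * Y * (2^-1 * X) =
      (Num.sg d ^+ 2 + 1) * (X * Y) / (2 * Num.sqrt 2) by field.
  rewrite sg2 XY; field; by rewrite tn0 nn0.
- move=> Cz.
  have : Y ^+ 2 = 0 by rewrite Y2 /S Cz mulr0 add0r sqrtr_sqr addNr mul0r.
  by move/eqP; rewrite sqrf_eq0 => /eqP ->; rewrite mulr0.
Qed.
End S.

Theorem proposition2 (R : rcfType) (r fs : 'rV[R]_3) :
  r != 0 -> dforce r (gvec r fs) (hvec r fs) = fs.
Proof.
move=> r0.
have Npos : 0 < dot r r.
  rewrite Order.POrderTheory.lt_def dot_ge0 andbT; apply/eqP => /dot_eq0 h; by rewrite h eqxx in r0.
have npos : 0 < vnorm r by rewrite /vnorm sqrtr_gt0.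
have hn2 : dot r r = vnorm r ^+ 2 by rewrite /vnorm sqr_sqrtr // ltW.
have Nn0 : dot r r != 0 by rewrite gt_eqF.
have hPhi : Phi1 r fs = Num.sqrt (2 * dot (cross r fs) (cross r fs) + dot r fs ^+ 2).
  rewrite /Phi1 /vnorm !sqr_sqrtr ?dot_ge0 // lagrange; congr Num.sqrt; ring.
have [K1 K2 K3] : [/\ g_rf r fs * h_rf r fs - 2 * g_r r fs * h_r r fs = dot r fs / vnorm r,
   g_r r fs * h_rf r fs + g_rf r fs * h_r r fs = Num.sqrt (dot (cross r fs) (cross r fs)) / vnorm r &
   dot (cross r fs) (cross r fs) = 0 -> h_rf r fs = 0].
  by rewrite /g_r /g_rf /h_r /h_rf /Phi2 hPhi; apply: scalar_core => //; exact: dot_ge0.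
rewrite /gvec /hvec.
move: K1 K2 K3; move: (g_r r fs) (g_rf r fs) (h_r r fs) (h_rf r fs) => g1 g2 h1 h2 K1 K2 K3.
have hre : dot r (cross (cross r fs) r) = 0 by rewrite cross_id !dotE !mxE; ring.
have hee : dot (cross (cross r fs) r) (cross (cross r fs) r) =
   dot (cross r fs) (cross r fs) * dot r r.
  by rewrite cross_id lagrange !dotE !mxE; ring.
have hfs : fs = (dot r fs / dot r r) *: r + (dot r r)^-1 *: cross (cross r fs) r.
  by rewrite cross_id; apply: vecP; rewrite !mxE; field.
have hd : dot r fs = (g2 * h2 - 2 * g1 * h1) * vnorm r.
  by rewrite K1 mulrVK // unitfE gt_eqF.
case: ifP => hc.
- rewrite dforce_dec // hee [RHS]hfs.
  have Cpos : 0 < dot (cross r fs) (cross r fs).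
    rewrite Order.POrderTheory.lt_def dot_ge0 andbT; apply/eqP => /dot_eq0 h.
    by rewrite h eqxx in hc.
  have s0 : 0 < vnorm (cross r fs) by rewrite /vnorm sqrtr_gt0.
  have hs : vnorm (cross r fs) ^+ 2 = dot (cross r fs) (cross r fs) by rewrite sqr_sqrtr // ltW.
  rewrite -/(vnorm (cross r fs)) in K2.
  move: K2 hs s0; move: (vnorm (cross r fs)) => s K2 hs s0.
  rewrite hd -hs hn2.
  move: npos K2; move: (vnorm r) => n npos K2.
  have nn0 : n != 0 by rewrite gt_eqF.
  have sn0 : s != 0 by rewrite gt_eqF.
  congr (_ *: _ + _ *: _).
    by field; rewrite nn0 sn0.
  have hs' : s = (g1 * h2 + g2 * h1) * n by rewrite K2 divfK.
  have An0 : g1 * h2 + g2 * h1 != 0.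
    by apply: contraNneq sn0 => h; rewrite hs' h mul0r.
  rewrite hs'; field; by rewrite nn0 An0.
- have cz : cross r fs = 0 by apply/eqP; move/negbFE: hc.
  have := @dforce_dec R r _ (g1 / vnorm r) 0 (h1 / vnorm r) 0 hre r0.
  rewrite !scale0r !addr0 => ->.
  have e0 : cross (cross r fs) r = 0 by rewrite cz; apply: vecP; rewrite /cross /c0 /c1 /c2 !mkvE !mxE /= ?(mul0r, mulr0, subrr).
  rewrite [RHS]hfs e0 scaler0 addr0 hd hn2.
  rewrite K3 ?cz; last by rewrite dotE !mxE; ring.
  move: npos; move: (vnorm r) => n npos.
  have nn0 : n != 0 by rewrite gt_eqF.
  rewrite scaler0 addr0; congr (_ *: _); field; exact: nn0.
Qed.
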